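(* Let $(P,h)$ be a floor plan with $P=(p_1,\dots,p_r)$. Suppose there exists $i$ such that $x(p_i)>0$ and, for all $j$ with $x(p_j)=x(p_i)-1$, we have $y(p_j)<y(p_i)$. Let $P'=(p'_1,\dots,p'_r)$ with $p'_i=p_i-(1,0)$ and $p'_k=p_k$ for $k\neq i$. Then $(P',h)<(P,h)$, i.e. $\lambda_{(P',h)}\subsetneq\lambda_{(P,h)}$.
   Context: For $p\in\mathbb{N}^2$, $x(p)$ and $y(p)$ denote its coordinates. A floor plan is a pair $(P,h)$ of sequences $P=(p_1,\dots,p_r)$ with $p_i\in\mathbb{N}^2$ and $h=(h_1,\dots,h_r)$ with $h_i$ positive integers. A North-East path is a sequence $(q_1,\dots,q_m)$ in $\mathbb{N}^2$ with $q_{j+1}-q_j\in\{(1,0),(0,1)\}$, originating at $q_1$; its score w.r.t. $(P,h)$ is $\sum_{i:\,p_i\in\{q_1,\dots,q_m\}}h_i$, and $\max\mathrm{score}_{(P,h)}(q)$ is the maximal score of a path originating at $q$. $\lambda_{(P,h)}\subseteq\mathbb{N}^3$ is the $3$-dimensional Young diagram $\{(x,y,z): 0\le z<\max\mathrm{score}_{(P,h)}(x,y)\}$. For floor plans with the same $h$, $(P',h)\le(P,h)$ means $\lambda_{(P',h)}\subseteq\lambda_{(P,h)}$, and $<$ means $\le$ with $\lambda_{(P',h)}\ne\lambda_{(P,h)}$. *)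

(* Defs.v *)
From mathcomp Require Import all_boot.
From Stdlib Require Import ClassicalEpsilon.
Set Implicit Arguments. Unset Strict Implicit. Unset Printing Implicit Defensive.

(* Points of N^2 are pairs (x, y) : nat * nat; x(p) = p.1, y(p) = p.2. *)
Definition point := (nat * nat)%type.

Definition floor_plan (P : seq point) (h : seq nat) : Prop :=
  size h = size P /\ forall i, i < size P -> 0 < nth 0 h i.

Definition ne_step (q q' : point) : bool :=
  (q' == (q.1.+1, q.2)) || (q' == (q.1, q.2.+1)).

(* A North-East path (q_1, ..., q_m), m >= 1, is given as q_1 :: qs with
   path ne_step q_1 qs; it originates at q_1. *)
Definition ne_path (q1 : point) (qs : seq point) : bool := path ne_step q1 qs.

Definition score (P : seq point) (h : seq nat) (q1 : point) (qs : seq point) : nat :=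
  \sum_(i < size P | nth (0, 0) P i \in q1 :: qs) nth 0 h i.

Definition is_maxscore (P : seq point) (h : seq nat) (q : point) (m : nat) : Prop :=
  (exists qs, ne_path q qs /\ score P h q qs = m) /\
  (forall qs, ne_path q qs -> score P h q qs <= m).

(* maxscore_{(P,h)}(q): the maximal score (chosen by Hilbert's epsilon
   among the values satisfying is_maxscore; this maximum always exists). *)
Definition maxscore (P : seq point) (h : seq nat) (q : point) : nat :=
  epsilon (inhabits 0) (is_maxscore P h q).

Definition young (P : seq point) (h : seq nat) : nat * nat * nat -> Prop :=
  fun v => let: (x, y, z) := v in z < maxscore P h (x, y).

Definition fp_le (P' P : seq point) (h : seq nat) : Prop :=
  forall v, young P' h v -> young P h v.

Definition fp_lt (P' P : seq point) (h : seq nat) : Prop :=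
  fp_le P' P h /\ young P' h <> young P h.

(* Main.v *)
Require Import Defs.
From mathcomp Require Import all_boot.
From Stdlib Require Import ClassicalEpsilon Classical.
From mathcomp Require Import zify.
Set Implicit Arguments. Unset Strict Implicit.

Lemma bounded_max (A : nat -> Prop) S :
  (forall m, A m -> m <= S) -> (exists m, A m) ->
  exists m, A m /\ forall k, A k -> k <= m.
Proof.
elim: S => [|S IH] Hb [m Am].
  exists m; split => // k Ak; have := Hb k Ak; lia.
case: (classic (A S.+1)) => HS.
  by exists S.+1; split.
apply: IH; last by exists m.
move=> k Ak; have := Hb k Ak; rewrite leq_eqVlt => /orP[/eqP Ek|//].
by subst k.
Qed.

Lemma maxscoreP P h q : is_maxscore P h q (maxscore P h q).
Proof.
apply: epsilon_spec.
have Hb : forall m, (exists qs, ne_path q qs /\ score P h q qs = m) -> m <= \sum_(k < size P) nth 0 h k.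
  move=> m [qs [_ <-]]; rewrite /score [X in _ <= X](bigID (fun k : 'I_(size P) => nth (0,0) P k \in q :: qs)) /=.
  exact: leq_addr.
have He : exists m, exists qs, ne_path q qs /\ score P h q qs = m.
  by exists (score P h q [::]), [::].
have [m [[qs [Hp Hs]] Hm]] := @bounded_max _ _ Hb He.
by exists m; split; [exists qs | move=> qs' Hqs'; apply: Hm; exists qs'].
Qed.

Lemma scoreE P h q qs : score P h q qs =
  \sum_(0 <= k < size P) (if nth (0,0) P k \in q :: qs then nth 0 h k else 0).
Proof. by rewrite /score big_mkcond big_mkord. Qed.

Lemma ne_mono q qs : path ne_step q qs -> forall r, r \in q :: qs -> q.1 <= r.1 /\ q.2 <= r.2.
Proof.
elim: qs q => [|q1 qs IH] q /=.
  by move=> _ r; rewrite inE => /eqP ->.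
case/andP => Hst Hp r; rewrite inE => /orP[/eqP -> //|Hr].
have [h1 h2] := IH _ Hp r Hr.
by move: Hst; rewrite /ne_step => /orP[/eqP E|/eqP E]; rewrite E /= in h1 h2; lia.
Qed.

Lemma reroute_col A y rs : path ne_step (A, y) rs ->
  exists rs', path ne_step (A.+1, y) rs' /\
    forall r, r \in rs -> r.1 = A \/ r \in (A.+1, y) :: rs'.
Proof.
elim: rs y => [|r rs IH] y /=.
  by move=> _; exists [::]; split.
case/andP; rewrite /ne_step /= => /orP[/eqP E|/eqP E] Hp; subst r.
  exists rs; split => // r; rewrite inE => /orP[/eqP ->|Hr]; right.
    by rewrite eqxx.
  by rewrite Hr orbT.
have [rs' [Hp' Hm]] := IH _ Hp.
exists ((A.+1, y.+1) :: rs'); split.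
  by rewrite /= /ne_step eqxx orbT.
move=> r; rewrite inE => /orP[/eqP ->|Hr]; first by left.
case: (Hm r Hr) => [->|Hr']; first by left.
by right; rewrite inE Hr' orbT.
Qed.

Lemma reroute A b q qs : path ne_step q qs -> (A, b) \in q :: qs ->
  exists qs', path ne_step q qs' /\ (A.+1, b) \in q :: qs' /\
    forall r, r \in q :: qs -> r \in q :: qs' \/ (r.1 = A /\ b <= r.2).
Proof.
elim: qs q => [|q1 qs IH] q Hp Hin.
  move: Hin; rewrite inE => /eqP Eq; subst q.
  exists [:: (A.+1, b)]; split; first by rewrite /= /ne_step eqxx.
  split; first by rewrite ?inE eqxx ?orbT.
  by move=> r; rewrite inE => /eqP ->; left; rewrite ?inE eqxx.
case: (eqVneq q (A, b)) => [Eq|Nq].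
  subst q.
  have [rs' [Hp' Hm]] := reroute_col Hp.
  exists ((A.+1, b) :: rs'); split; first by rewrite /= /ne_step eqxx Hp'.
  split; first by rewrite ?inE eqxx ?orbT.
  move=> r; rewrite inE => /orP[/eqP ->|Hr]; first by left; rewrite ?inE eqxx.
  case: (Hm r Hr) => [E|Hr']; last by left; rewrite in_cons Hr' orbT.
  right; split => //.
  have Hr2 : r \in (A, b) :: q1 :: qs by rewrite inE Hr orbT.
  by have [_ ] := ne_mono Hp Hr2.
move: Hin; rewrite in_cons eq_sym (negbTE Nq) /= => Hin.
move: Hp => /= /andP[Hst Hp].
have [qs1 [Hp1 [Hin1 Hm]]] := IH q1 Hp Hin.
exists (q1 :: qs1); split; first by rewrite /= Hst.
split; first by rewrite in_cons; apply/orP; right.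
move=> r; rewrite inE => /orP[/eqP ->|Hr]; first by left; rewrite ?inE eqxx.
case: (Hm r Hr) => [H|H]; last by right.
by left; rewrite in_cons; apply/orP; right.
Qed.

Theorem lemma5p1 (P : seq point) (h : seq nat) (i : nat) :
  floor_plan P h ->
  i < size P ->
  0 < (nth (0, 0) P i).1 ->
  (forall j, j < size P ->
     (nth (0, 0) P j).1 = (nth (0, 0) P i).1 - 1 ->
     (nth (0, 0) P j).2 < (nth (0, 0) P i).2) ->
  fp_lt (set_nth (0, 0) P i ((nth (0, 0) P i).1 - 1, (nth (0, 0) P i).2)) P h.
Proof.
move=> [Hsz Hpos] Hi.
case Ep: (nth (0,0) P i) => [a b] /=.
case: a Ep => [|A] Ep // _; rewrite subSS subn0 => Hcol.
set P' := set_nth (0,0) P i (A, b).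
have szP' : size P' = size P by rewrite size_set_nth; apply/maxn_idPr.
have nthP' k : nth (0,0) P' k = if k == i then (A,b) else nth (0,0) P k.
  by rewrite nth_set_nth.
have le q : maxscore P' h q <= maxscore P h q.
  have [[qs [Hp <-]] _] := maxscoreP P' h q.
  have [_ Hmax] := maxscoreP P h q.
  suff [qs' [Hp' Hle]] : exists qs', ne_path q qs' /\ score P' h q qs <= score P h q qs'.
    exact: leq_trans Hle (Hmax _ Hp').
  case: (boolP ((A,b) \in q :: qs)) => Hin.
  - have [qs' [Hp' [Hin' Hm]]] := reroute Hp Hin.
    exists qs'; split => //.
    rewrite !scoreE szP' big_nat_cond [X in _ <= X]big_nat_cond.
    apply: leq_sum => k /andP[/andP[_ Hk] _].
    rewrite nthP'; case: eqVneq => [->|Hki].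
      by rewrite Ep Hin'; case: ifP.
    case: ifP => // Hkin.
    have [H|[H1 H2]] := Hm _ Hkin; first by rewrite H.
    exfalso; have := Hcol k Hk H1; by rewrite ltnNge H2.
  - exists qs; split => //.
    rewrite !scoreE szP'; apply: leq_sum => k _.
    rewrite nthP'; case: eqVneq => [->|Hki] //.
    by rewrite (negbTE Hin).
have strict : maxscore P' h (A.+1, b) < maxscore P h (A.+1, b).
  have [[qs [Hp <-]] _] := maxscoreP P' h (A.+1, b).
  have [_ Hmax] := maxscoreP P h (A.+1, b).
  apply: leq_trans (Hmax _ Hp).
  rewrite !scoreE szP'.
  have Hii : i \in index_iota 0 (size P) by rewrite mem_index_iota.
  rewrite (bigD1_seq i Hii (iota_uniq _ _)) [X in _ < X](bigD1_seq i Hii (iota_uniq _ _)) /=.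
  rewrite nthP' eqxx Ep mem_head.
  have -> : ((A,b) \in (A.+1,b) :: qs) = false.
    apply/negbTE/negP => H; have [H1 _] := ne_mono Hp H; simpl in H1; lia.
  rewrite add0n.
  under eq_bigr => k Hk do rewrite nthP' (negbTE Hk).
  have := Hpos i Hi; lia.
split.
  move=> [[x y] z] /= H; exact: leq_trans H (le _).
move=> E.
have H : young P h (A.+1, b, maxscore P' h (A.+1, b)) by exact: strict.
by rewrite -E /young ltnn in H.
Qed.
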